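(* Let $\xi=(\omega,\gamma,\mu,c)$ be a normalized quasi-abelian 3-cocycle on a finite crossed module $(G,X,\partial)$. The braided fusion category $\mathcal{C}(\xi)^G$ is nondegenerate if and only if the homomorphism $\partial$ is surjective and $\xi$ is nondegenerate.
   Context: $\mathbb{K}$ is an algebraically closed field of characteristic $0$. A finite crossed module is a triple $(G,X,\partial)$ with $G,X$ finite groups, $G$ acting on $X$ by automorphisms $(g,x)\mapsto {}^{g}x$, and $\partial:X\to G$ a homomorphism with ${}^{\partial(x)}x'=xx'x^{-1}$ and $\partial({}^gx)=g\partial(x)g^{-1}$. A quasi-abelian 3-cocycle on it is a quadruple $\xi=(\omega,\gamma,\mu,c)$ of functions $\omega:X^3\to\mathbb{K}^\times$, $(g,h,x)\mapsto\gamma_{g,h}(x)$ on $G\times G\times X$, $(g,x,y)\mapsto\mu_g(x,y)$ on $G\times X\times X$, $c:X^2\to\mathbb{K}^\times$, such that for all $g,h,k\in G$, $w,x,y,z\in X$: (a) $\omega(x,y,z)\omega(w,xy,z)\omega(w,x,y)=\omega(w,x,yz)\omega(wx,y,z)$; (b) $\gamma_{h,k}(x)\gamma_{g,hk}(x)=\gamma_{gh,k}(x)\gamma_{g,h}({}^kx)$; (c) $\frac{\mu_g(y,z)\mu_g(x,yz)}{\mu_g(xy,z)\mu_g(x,y)}=\frac{\omega({}^gx,{}^gy,{}^gz)}{\omega(x,y,z)}$; (d) $\frac{\gamma_{g,h}(x)\gamma_{g,h}(y)}{\gamma_{g,h}(xy)}=\frac{\mu_g({}^hx,{}^hy)\mu_h(x,y)}{\mu_{gh}(x,y)}$;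 (e) $\frac{c({}^gx,{}^gy)}{c(x,y)}=\frac{\mu_g(xyx^{-1},x)}{\mu_g(x,y)}\cdot\frac{\gamma_{g\partial(x)g^{-1},g}(y)}{\gamma_{g,\partial(x)}(y)}$; (f) $c(xy,z)=\frac{\omega(x,y,z)\,\omega((xy)z(xy)^{-1},x,y)}{\omega(x,yzy^{-1},y)\,\gamma_{\partial(x),\partial(y)}(z)}\,c(x,yzy^{-1})\,c(y,z)$; (g) $c(x,yz)=\frac{\omega(xyx^{-1},x,z)}{\omega(x,y,z)\,\omega(xyx^{-1},xzx^{-1},x)\,\mu_{\partial(x)}(y,z)}\,c(x,y)\,c(x,z)$. It is normalized if $\omega(x,y,z)=1$ whenever one of $x,y,z$ is $e$, $\gamma_{g,h}(x)=1$ whenever one of $g,h,x$ is $e$, $\mu_g(x,y)=1$ whenever one of $g,x,y$ is $e$, and $c(x,y)=1$ whenever $x$ or $y$ is $e$. A normalized $\xi$ is nondegenerate if the symmetric bicharacter $\mathrm{Ker}\,\partial\times\mathrm{Ker}\,\partial\to\mathbb{K}^\times$, $(x,y)\mapsto c(y,x)c(x,y)$, on the abelian group $\mathrm{Ker}\,\partial$ is nondegenerate. $\mathcal{C}(\xi)$ denotes the fusion category $\mathrm{Vec}_X^\omega$ of finite-dimensional $X$-graded vector spaces (tensor product $\otimes_\mathbb{K}$ with degrees multiplied, associativity $(u\otimes v)\otimes w\mapsto\omega(x,y,z)u\otimes(v\otimes w)$ for homogeneous $u,v,w$ of degrees $x,y,z$) with: the $G$-grading with $\mathcal{C}_g$ the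 objects supported on $\partial^{-1}(g)$; functors $T_g$ sending homogeneous $V$ of degree $x$ to the same space in degree ${}^gx$; and for homogeneous $V,W$ of degrees $x,y$ the isomorphisms $\tilde\gamma_{g,h}(V)=\gamma_{g,h}(x)\mathrm{id}_V:T_{gh}(V)\to T_gT_h(V)$, $\tilde\mu_g(V,W)=\mu_g(x,y)\mathrm{id}:T_g(V\otimes W)\to T_gV\otimes T_gW$, $\tilde c(V,W)=c(x,y)\tau_{V,W}:V\otimes W\to T_{\partial(x)}(W)\otimes V$ ($\tau$ the flip). The equivariantization $\mathcal{C}(\xi)^G$ is the braided fusion category of pairs $(V,\{u_g\})$, $u_g:T_g(V)\to V$ isomorphisms with $u_{gh}=u_g\circ T_g(u_h)\circ\tilde\gamma_{g,h}(V)$; morphisms commute with the $u_g$; tensor product $(V\otimes V',\{(u_g\otimes u'_g)\circ\tilde\mu_g(V,V')\})$; associativity from $\mathrm{Vec}_X^\omega$; braiding given on $V_g\otimes V'$ ($V_g$ the component of $V$ in $\mathcal{C}_g$) by $(u'_g\otimes\mathrm{id})\circ\tilde c(V_g,V')$. A braided fusion category is nondegenerate if the only objects $Y$ with $c_{Y,Z}\circ c_{Z,Y}=\mathrm{id}$ and $c_{Z,Y}\circ c_{Y,Z}=\mathrm{id}$ for all objects $Z$ are direct sums of the unit object. *)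

(* Defs.v *)
From HB Require Import structures.
From mathcomp Require Import all_boot all_order all_algebra all_fingroup.
Set Implicit Arguments. Unset Strict Implicit. Unset Printing Implicit Defensive.
Import GRing.Theory.
Local Open Scope ring_scope.

Record crossed_module (G X : finGroupType) := CrossedModule {
  cm_act : G -> X -> X;
  cm_d   : X -> G
}.

Definition is_crossed_module (G X : finGroupType) (M : crossed_module G X) : Prop :=
  let act := cm_act M in let d := cm_d M in
  (forall x, act 1%g x = x) /\
  (forall g h x, act (g * h)%g x = act g (act h x)) /\
  (forall g x y, act g (x * y)%g = (act g x * act g y)%g) /\
  (forall x y, d (x * y)%g = (d x * d y)%g) /\
  (forall x x', act (d x) x' = (x * x' * x^-1)%g) /\
  (forall g x, d (act g x) = (g * d x * g^-1)%g).

Record qa_data (K : fieldType) (G X : finGroupType) := QAData {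
  qa_om  : X -> X -> X -> K;
  qa_gam : G -> G -> X -> K;
  qa_mu  : G -> X -> X -> K;
  qa_c   : X -> X -> K
}.

Definition is_qa_cocycle (K : fieldType) (G X : finGroupType)
    (M : crossed_module G X) (xi : qa_data K G X) : Prop :=
  let act := cm_act M in let d := cm_d M in
  let om := qa_om xi in let gam := qa_gam xi in
  let mu := qa_mu xi in let c := qa_c xi in
  (
      (forall x y z, om x y z != 0) /\ (forall g h x, gam g h x != 0) /\
      (forall g x y, mu g x y != 0) /\ (forall x y, c x y != 0)) /\
      (forall w x y z,
         om x y z * om w (x * y)%g z * om w x y = om w x (y * z)%g * om (w * x)%g y z) /\
      (forall g h k x,
         gam h k x * gam g (h * k)%g x = gam (g * h)%g k x * gam g h (act k x)) /\
      (forall g x y z,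
         (mu g y z * mu g x (y * z)%g) / (mu g (x * y)%g z * mu g x y)
         = om (act g x) (act g y) (act g z) / om x y z) /\
      (forall g h x y,
         (gam g h x * gam g h y) / gam g h (x * y)%g
         = (mu g (act h x) (act h y) * mu h x y) / mu (g * h)%g x y) /\
      (forall g x y,
         c (act g x) (act g y) / c x y
         = mu g (x * y * x^-1)%g x / mu g x y
           * (gam (g * d x * g^-1)%g g y / gam g (d x) y)) /\
      (forall x y z,
         c (x * y)%g z
         = (om x y z * om ((x * y) * z * (x * y)^-1)%g x y)
             / (om x (y * z * y^-1)%g y * gam (d x) (d y) z)
           * c x (y * z * y^-1)%g * c y z) /\
      (forall x y z,
         c x (y * z)%g
         = om (x * y * x^-1)%g x z
             / (om x y z * om (x * y * x^-1)%g (x * z * x^-1)%g x * mu (d x) y z)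
           * c x y * c x z).

Definition qa_normalized (K : fieldType) (G X : finGroupType) (xi : qa_data K G X) : Prop :=
  let om := qa_om xi in let gam := qa_gam xi in
  let mu := qa_mu xi in let c := qa_c xi in
  [/\ (forall x y z, x = 1%g \/ y = 1%g \/ z = 1%g -> om x y z = 1),
      (forall g h x, g = 1%g \/ h = 1%g \/ x = 1%g -> gam g h x = 1),
      (forall g x y, g = 1%g \/ x = 1%g \/ y = 1%g -> mu g x y = 1)
    & (forall x y, x = 1%g \/ y = 1%g -> c x y = 1)].

(* nondegeneracy of the bicharacter (x,y) |-> c(y,x) c(x,y) on Ker d:
   its radical is trivial *)
Definition qa_nondegenerate (K : fieldType) (G X : finGroupType)
    (M : crossed_module G X) (xi : qa_data K G X) : Prop :=
  forall x, cm_d M x = 1%g ->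
    (forall y, cm_d M y = 1%g -> qa_c xi y x * qa_c xi x y = 1) -> x = 1%g.

Definition cm_surjective (G X : finGroupType) (M : crossed_module G X) : Prop :=
  forall g : G, exists x : X, cm_d M x = g.

(* ---------- linear maps between spaces with finite bases ----------
   f : lmap I J  represents the linear map K^I -> K^J sending the basis
   vector e_i to \sum_j f i j e_j.  [lcomp f g] is "first f, then g". *)
Definition lmap (K : fieldType) (I J : finType) := I -> J -> K.
Definition lcomp (K : fieldType) (I J L : finType) (f : lmap K I J) (g : lmap K J L)
  : lmap K I L := fun i l => \sum_(j : J) f i j * g j l.
Definition lid (K : fieldType) (I : finType) : lmap K I I := fun i j => (i == j)%:R.
Arguments lid {K I} _ _.

(* ---------- the equivariantization C(xi)^G, concretely ----------
   An object is an X-graded space given with a homogeneous basis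
   e_0..e_{n-1} (e_i of degree obdeg i), together with the matrices of
   the isomorphisms u_g : T_g(V) -> V. *)
Record eqobj (K : fieldType) (G X : finGroupType) := EqObj {
  obdim : nat;
  obdeg : 'I_obdim -> X;
  obU   : G -> lmap K 'I_obdim 'I_obdim
}.
Arguments obdeg {K G X} e _.
Arguments obU {K G X} e _ _ _.

Definition valid_obj (K : fieldType) (G X : finGroupType)
    (M : crossed_module G X) (xi : qa_data K G X) (V : eqobj K G X) : Prop :=
  [/\ (* u_g is a morphism of X-graded spaces T_g(V) -> V *)
      (forall g i j, obU V g i j != 0 -> obdeg V j = cm_act M g (obdeg V i)),
      (forall g, exists W : lmap K 'I_(obdim V) 'I_(obdim V),
         lcomp (obU V g) W = lid /\ lcomp W (obU V g) = lid)
    & (* u_{gh} = u_g o T_g(u_h) o gamma~_{g,h}(V) *)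
      (forall g h i k,
         obU V (g * h)%g i k
         = qa_gam xi g h (obdeg V i) * \sum_j obU V h i j * obU V g j k)].

Definition is_mor (K : fieldType) (G X : finGroupType)
    (V W : eqobj K G X) (F : lmap K 'I_(obdim V) 'I_(obdim W)) : Prop :=
  (forall i j, F i j != 0 -> obdeg W j = obdeg V i) /\
  (forall g, lcomp (obU V g) F = lcomp F (obU W g)).
Arguments is_mor {K G X} V W F.

(* braiding c_{V,W} : V (x) W -> W (x) V, with basis e_i (x) f_j :
   e_i (x) f_j |-> c(deg e_i, deg f_j) . u^W_{d(deg e_i)}(f_j) (x) e_i *)
Definition braid (K : fieldType) (G X : finGroupType)
    (M : crossed_module G X) (xi : qa_data K G X) (V W : eqobj K G X)
  : lmap K ('I_(obdim V) * 'I_(obdim W))%type ('I_(obdim W) * 'I_(obdim V))%type :=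
  fun p q => (q.2 == p.1)%:R * qa_c xi (obdeg V p.1) (obdeg W p.2)
             * obU W (cm_d M (obdeg V p.1)) p.2 q.1.
Arguments braid {K G X} M xi V W _ _.

Definition unit_sum (K : fieldType) (G X : finGroupType) (n : nat) : eqobj K G X :=
  @EqObj K G X n (fun _ => 1%g) (fun _ => lid).

Definition is_sum_of_units (K : fieldType) (G X : finGroupType) (Y : eqobj K G X) : Prop :=
  exists n (F : lmap K 'I_(obdim Y) 'I_n) (H : lmap K 'I_n 'I_(obdim Y)),
    [/\ is_mor Y (unit_sum K G X n) F, is_mor (unit_sum K G X n) Y H,
        lcomp F H = lid & lcomp H F = lid].

Definition transparent (K : fieldType) (G X : finGroupType)
    (M : crossed_module G X) (xi : qa_data K G X) (Y : eqobj K G X) : Prop :=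
  forall Z, valid_obj M xi Z ->
    lcomp (braid M xi Y Z) (braid M xi Z Y) = lid /\
    lcomp (braid M xi Z Y) (braid M xi Y Z) = lid.

Definition equivariantization_nondegenerate (K : fieldType) (G X : finGroupType)
    (M : crossed_module G X) (xi : qa_data K G X) : Prop :=
  forall Y, valid_obj M xi Y -> transparent M xi Y -> is_sum_of_units Y.

(* Main.v *)
Require Import Defs.
From mathcomp Require Import all_boot all_order all_algebra all_fingroup.
From Stdlib Require Import FunctionalExtensionality.
From mathcomp Require Import ring.
Set Implicit Arguments. Unset Strict Implicit. Unset Printing Implicit Defensive.
Import GRing.Theory.
Local Open Scope ring_scope.

Lemma sum_delta1 (K : fieldType) (T : finType) (a : T) (F : T -> K) :
  (forall q, q != a -> F q = 0) -> \sum_q F q = F a.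
Proof. by move=> H; rewrite (bigD1 a) //= big1 ?addr0 // => q /H. Qed.

Lemma lcompA (K : fieldType) (I J L N : finType) (f : lmap K I J) (g : lmap K J L)
  (h : lmap K L N) : lcomp (lcomp f g) h = lcomp f (lcomp g h).
Proof.
apply: functional_extensionality => i; apply: functional_extensionality => n.
rewrite /lcomp.
under eq_bigr do rewrite mulr_suml.
rewrite exchange_big /=; apply: eq_bigr => j _; rewrite mulr_sumr.
by apply: eq_bigr => l _; rewrite mulrA.
Qed.

Lemma lcomp_lid (K : fieldType) (I J : finType) (f : lmap K I J) : lcomp f lid = f.
Proof.
apply: functional_extensionality => i; apply: functional_extensionality => j.
rewrite /lcomp (@sum_delta1 _ _ j) /lid ?eqxx ?mulr1 // => q /negbTE->; by rewrite mulr0.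
Qed.

Lemma lid_lcomp (K : fieldType) (I J : finType) (f : lmap K I J) : lcomp lid f = f.
Proof.
apply: functional_extensionality => i; apply: functional_extensionality => j.
rewrite /lcomp (@sum_delta1 _ _ i) /lid ?eqxx ?mul1r // => q.
by rewrite eq_sym => /negbTE->; rewrite mul0r.
Qed.

Lemma lid_pair (K : fieldType) (I J : finType) (p r : (I * J)%type) :
  (lid p r : K) = (p.1 == r.1)%:R * (p.2 == r.2)%:R.
Proof. by rewrite /lid -natrM mulnb -xpair_eqE -!surjective_pairing. Qed.

Lemma swap_lcomp (K : fieldType) (I J : finType) (f : lmap K (I * J)%type (J * I)%type)
   (g : lmap K (J * I)%type (I * J)%type) :
  (forall p q, f p q = (q == (p.2, p.1))%:R) ->
  (forall p q, g p q = (q == (p.2, p.1))%:R) -> lcomp f g = lid.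
Proof.
move=> Hf Hg; apply: functional_extensionality => p; apply: functional_extensionality => r.
rewrite /lcomp (@sum_delta1 _ _ (p.2, p.1)).
  by rewrite Hf Hg eqxx mul1r /lid; case: p => a b /=; rewrite eq_sym.
by move=> q /negbTE Hq; rewrite Hf Hq mul0r.
Qed.

Lemma cm_act1 (G X : finGroupType) (M : crossed_module G X) (HM : is_crossed_module M) g :
  cm_act M g 1%g = 1%g.
Proof.
case: HM => _ [_ [Hm _]].
have := Hm g 1%g 1%g; rewrite mulg1 => E.
by apply: (@mulgI _ (cm_act M g 1%g)); rewrite -E mulg1.
Qed.

Lemma cm_d1 (G X : finGroupType) (M : crossed_module G X) (HM : is_crossed_module M) :
  cm_d M 1%g = 1%g.
Proof.
case: HM => _ [_ [_ [Hd _]]].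
have := Hd 1%g 1%g; rewrite mulg1 => E.
by apply: (@mulgI _ (cm_d M 1%g)); rewrite -E mulg1.
Qed.

Lemma cm_dV (G X : finGroupType) (M : crossed_module G X) (HM : is_crossed_module M) x :
  cm_d M x^-1 = (cm_d M x)^-1%g.
Proof.
have H1 := cm_d1 HM. case: HM => _ [_ [_ [Hd _]]].
apply: (@mulgI _ (cm_d M x)); rewrite -Hd mulgV mulgV; exact: H1.
Qed.

Lemma cm_central (G X : finGroupType) (M : crossed_module G X) (HM : is_crossed_module M) x y :
  cm_d M x = 1%g -> (y * x = x * y)%g.
Proof.
move=> Hx; case: HM => H1 [_ [_ [_ [Hp _]]]].
have := Hp x y; rewrite Hx H1 => E.
by rewrite {1}E -!mulgA mulVg mulg1.
Qed.

Lemma cm_actd_central (G X : finGroupType) (M : crossed_module G X) (HM : is_crossed_module M) x y :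
  cm_d M x = 1%g -> cm_act M (cm_d M y) x = x.
Proof.
move=> Hx; have C := @cm_central _ _ M HM x y Hx.
case: HM => H1 [_ [_ [_ [Hp _]]]].
by rewrite Hp C -mulgA mulgV mulg1.
Qed.

Lemma ev_eq (T : finType) (i j : 'I_#|T|) : (enum_val i == enum_val j) = (i == j).
Proof. exact: (inj_eq enum_val_inj). Qed.

Lemma sum_ev (K : fieldType) (T : finType) (t : T) (F : 'I_#|T| -> K) :
  (forall j, enum_val j != t -> F j = 0) -> \sum_j F j = F (enum_rank t).
Proof.
move=> H; apply: sum_delta1 => q Hq; apply: H; apply: contra Hq => /eqP <-.
by rewrite enum_valK.
Qed.

Lemma valid_u1 (K : fieldType) (G X : finGroupType) (M : crossed_module G X)
  (xi : qa_data K G X) (Hn : qa_normalized xi) (Z : eqobj K G X) :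
  valid_obj M xi Z -> obU Z 1%g = lid.
Proof.
case=> _ Hinv Hco; case: Hn => _ Hg _ _.
have E : obU Z 1%g = lcomp (obU Z 1%g) (obU Z 1%g).
  apply: functional_extensionality => i; apply: functional_extensionality => k.
  by rewrite -{1}(mulg1 1%g) Hco Hg ?mul1r //; left.
case: (Hinv 1%g) => W [HW1 HW2].
by rewrite -HW1 {2}E lcompA HW1 lcomp_lid.
Qed.

Lemma valid_row (K : fieldType) (G X : finGroupType) (M : crossed_module G X)
  (xi : qa_data K G X) (Z : eqobj K G X) g i :
  valid_obj M xi Z -> (forall k, obU Z g i k = 0) -> False.
Proof.
case=> _ Hinv _ H0; case: (Hinv g) => W [HW1 _].
have := congr1 (fun f => f i i) HW1; rewrite /lcomp /lid eqxx big1 => [|k _]; last by rewrite H0 mul0r.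
by move/eqP; rewrite eq_sym oner_eq0.
Qed.

Definition Zobj (K : fieldType) (G X : finGroupType) (M : crossed_module G X)
  (xi : qa_data K G X) (y : X) : eqobj K G X :=
  @EqObj K G X #|G| (fun j => cm_act M (enum_val j) y)
    (fun h j k => (enum_val k == (h * enum_val j)%g)%:R / qa_gam xi h (enum_val j) y).

Lemma Zobj_valid (K : fieldType) (G X : finGroupType) (M : crossed_module G X) (HM : is_crossed_module M)
    (xi : qa_data K G X) (Hxi : is_qa_cocycle M xi) y :
  valid_obj M xi (Zobj M xi y).
Proof.
case: Hxi => [[om0 [gam0 [mu0 c0]]] [Ha [Hb _]]].
case: HM => _ [Hact _].
split => /=.
- move=> g i j /=; case E: (_ == (g * _)%g); last by rewrite mul0r eqxx.
  by move/eqP: E => -> _; rewrite Hact.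
- move=> h; exists (fun k j => (enum_val j == (h^-1 * enum_val k)%g)%:R * qa_gam xi h (enum_val j) y).
  split; apply: functional_extensionality => j; apply: functional_extensionality => l; rewrite /lcomp /lid.
  + rewrite (@sum_ev _ _ (h * enum_val j)%g) => [|k /negbTE->]; last by rewrite !mul0r.
    rewrite enum_rankK eqxx mul1r mulKg ev_eq (eq_sym j l); case: eqP => [->|_].
      by rewrite mul1r mulVf.
    by rewrite !mul0r mulr0.
  + rewrite (@sum_ev _ _ (h^-1 * enum_val j)%g) => [|k /negbTE->]; last by rewrite !mul0r.
    rewrite enum_rankK eqxx mul1r mulKVg ev_eq (eq_sym j l); case: eqP => _.
      by rewrite mul1r mulfV.
    by rewrite !mul0r mulr0.
- move=> g h i k.
  rewrite (@sum_ev _ _ (h * enum_val i)%g) => [|j /negbTE->]; last by rewrite !mul0r.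
  rewrite enum_rankK eqxx mulgA; case: (_ == (g * h * _)%g); last by rewrite /= !(mul0r, mulr0).
  have E := Hb g h (enum_val i) y.
  have E' : qa_gam xi (g * h)%g (enum_val i) y =
     qa_gam xi h (enum_val i) y * qa_gam xi g (h * enum_val i)%g y / qa_gam xi g h (cm_act M (enum_val i) y).
    by rewrite E mulfK.
  rewrite /= ?mulr1n E'; field.
  by rewrite !gam0.
Qed.

Lemma dbl_YZ (K : fieldType) (G X : finGroupType) (M : crossed_module G X) (HM : is_crossed_module M)
    (xi : qa_data K G X) (Hn : qa_normalized xi) (Y : eqobj K G X) y i k l :
  lcomp (braid M xi Y (Zobj M xi y)) (braid M xi (Zobj M xi y) Y) (i, enum_rank (1%g : G)) (k, l)
  = qa_c xi (obdeg Y i) y * ((l == enum_rank (cm_d M (obdeg Y i)))%:R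
      * qa_c xi (cm_act M (cm_d M (obdeg Y i)) y) (obdeg Y i)
      * obU Y (cm_d M (cm_act M (cm_d M (obdeg Y i)) y)) i k).
Proof.
have Hact1 : cm_act M 1%g y = y by case: HM.
case: Hn => _ Hg _ _.
rewrite /lcomp (@sum_delta1 _ _ (enum_rank (cm_d M (obdeg Y i)), i)).
  rewrite /braid /= !enum_rankK !eqxx mulg1 Hact1 !mul1r Hg ?divr1 ?eqxx ?mulr1 //.
  by right; left.
case=> a b /=; rewrite xpair_eqE negb_and => /orP [Ha|Hb].
  rewrite /braid /= enum_rankK mulg1.
  have -> : (enum_val a == cm_d M (obdeg Y i)) = false.
    by apply: negbTE; apply: contra Ha => /eqP <-; rewrite enum_valK.
  by rewrite !(mul0r, mulr0).
by rewrite /braid /= (negbTE Hb) !mul0r.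
Qed.

Lemma trans_key (K : fieldType) (G X : finGroupType) (M : crossed_module G X) (HM : is_crossed_module M)
    (xi : qa_data K G X) (Hxi : is_qa_cocycle M xi) (Hn : qa_normalized xi) (Y : eqobj K G X) :
  valid_obj M xi Y -> transparent M xi Y -> forall i,
  cm_d M (obdeg Y i) = 1%g /\
  forall y k, qa_c xi (obdeg Y i) y * qa_c xi y (obdeg Y i) * obU Y (cm_d M y) i k = (i == k)%:R.
Proof.
move=> HY HT i.
have c0 : forall x y, qa_c xi x y != 0 by case: Hxi => [[_ [_ [_ c0]]] _].
have H1 : cm_d M (obdeg Y i) = 1%g.
  have [E _] := HT _ (Zobj_valid HM Hxi 1%g).
  apply/eqP; apply/negPn/negP => Hne.
  apply: (@valid_row _ _ _ M xi Y (cm_d M (cm_act M (cm_d M (obdeg Y i)) 1%g)) i HY) => k.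
  have := congr1 (fun f => f (i, enum_rank (1%g : G)) (k, enum_rank (cm_d M (obdeg Y i)))) E.
  rewrite dbl_YZ // eqxx mul1r lid_pair /=.
  have -> : (enum_rank (1%g : G) == enum_rank (cm_d M (obdeg Y i))) = false.
    by apply: negbTE; apply: contra Hne => /eqP /(congr1 enum_val); rewrite !enum_rankK => <-.
  rewrite mulr0 => /eqP; rewrite mulf_eq0 (negbTE (c0 _ _)) /= mulf_eq0 (negbTE (c0 _ _)) /=.
  by move/eqP.
split => // y k.
have [E _] := HT _ (Zobj_valid HM Hxi y).
have := congr1 (fun f => f (i, enum_rank (1%g : G)) (k, enum_rank (1%g : G))) E.
have Hact1 : cm_act M 1%g y = y by case: HM.
rewrite dbl_YZ // H1 Hact1 eqxx mul1r lid_pair /= eqxx mulr1 => <-.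
by rewrite mulrA.
Qed.

Lemma backward (K : fieldType) (G X : finGroupType) (M : crossed_module G X) (HM : is_crossed_module M)
    (xi : qa_data K G X) (Hxi : is_qa_cocycle M xi) (Hn : qa_normalized xi) :
  cm_surjective M -> qa_nondegenerate M xi -> equivariantization_nondegenerate M xi.
Proof.
move=> Hs Hnd Y HY HT.
have Hk := trans_key HM Hxi Hn HY HT.
have u1 := valid_u1 Hn HY.
have deg1 : forall i, obdeg Y i = 1%g.
  move=> i; have [Hd Hc] := Hk i; apply: Hnd => // y Hy.
  have := Hc y i; rewrite Hy u1 /lid eqxx mulr1 => E.
  by rewrite mulrC E.
have uid : forall g, obU Y g = lid.
  move=> g; have [y <-] := Hs g.
  apply: functional_extensionality => i; apply: functional_extensionality => k.
  have [_ Hc] := Hk i; rewrite /lid -(Hc y k) deg1.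
  case: Hn => _ _ _ Hcn; rewrite !Hcn ?mul1r //; (try by left); by right.
exists (obdim Y), lid, lid; split; try by rewrite lcomp_lid.
- split => [i j _|g] /=; first by rewrite deg1.
  by rewrite uid.
- split => [i j _|g] /=; first by rewrite deg1.
  by rewrite uid.
Qed.

Lemma cm_conj_ker (G X : finGroupType) (M : crossed_module G X) (HM : is_crossed_module M) x z :
  cm_d M x = 1%g -> (z * x * z^-1 = x)%g /\ (x * z * x^-1 = z)%g.
Proof.
move=> Hx; have C := @cm_central _ _ M HM x z Hx.
by rewrite C -mulgA mulgV mulg1 -C -mulgA mulgV mulg1.
Qed.

Definition beta (K : fieldType) (G X : finGroupType) (xi : qa_data K G X) x y :=
  (qa_c xi x y * qa_c xi y x)^-1.

Lemma beta_mul (K : fieldType) (G X : finGroupType) (M : crossed_module G X) (HM : is_crossed_module M)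
    (xi : qa_data K G X) (Hxi : is_qa_cocycle M xi) (Hn : qa_normalized xi) x y y' :
  cm_d M x = 1%g ->
  beta xi x (y * y')%g = qa_gam xi (cm_d M y) (cm_d M y') x * beta xi x y * beta xi x y'.
Proof.
move=> Hx.
case: Hxi => [[om0 [gam0 [mu0 c0]]] [_ [_ [_ [_ [_ [Hf Hg]]]]]]].
case: Hn => _ _ Hmu _.
have [E1 _] := cm_conj_ker HM y' Hx.
have [E2 _] := cm_conj_ker HM (y * y')%g Hx.
have [_ E3] := cm_conj_ker HM y Hx.
have [_ E4] := cm_conj_ker HM y' Hx.
rewrite /beta Hf Hg E1 E2 E3 E4 Hx Hmu; last by left.
rewrite mulr1.
field.
by rewrite !om0 !gam0 !c0.
Qed.

Lemma beta_wd (K : fieldType) (G X : finGroupType) (M : crossed_module G X) (HM : is_crossed_module M)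
    (xi : qa_data K G X) (Hxi : is_qa_cocycle M xi) (Hn : qa_normalized xi) x :
  cm_d M x = 1%g -> (forall k, cm_d M k = 1%g -> qa_c xi k x * qa_c xi x k = 1) ->
  forall y y', cm_d M y = cm_d M y' -> beta xi x y = beta xi x y'.
Proof.
move=> Hx Hk y y' E.
have Hd : cm_d M (y^-1 * y')%g = 1%g.
  by case: (HM) => _ [_ [_ [Hd _]]]; rewrite Hd (cm_dV HM) E mulVg.
rewrite -(mulKVg y y') (beta_mul HM Hxi Hn _ _ Hx) Hd.
case: Hn => _ Hgam _ _; rewrite Hgam; last by right; left.
by rewrite /beta (mulrC (qa_c xi x (y^-1 * y')%g)) Hk // divr1 div1r.
Qed.

Definition lam (K : fieldType) (G X : finGroupType) (M : crossed_module G X) (xi : qa_data K G X) x g :=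
  if [pick y | cm_d M y == g] is Some y then beta xi x y else 1.

Lemma lam_d (K : fieldType) (G X : finGroupType) (M : crossed_module G X) (HM : is_crossed_module M)
    (xi : qa_data K G X) (Hxi : is_qa_cocycle M xi) (Hn : qa_normalized xi) x :
  cm_d M x = 1%g -> (forall k, cm_d M k = 1%g -> qa_c xi k x * qa_c xi x k = 1) ->
  forall y, lam M xi x (cm_d M y) = beta xi x y.
Proof.
move=> Hx Hk y; rewrite /lam; case: pickP => [y0 /eqP E|H].
  exact: (beta_wd HM Hxi Hn Hx Hk).
by have := H y; rewrite eqxx.
Qed.

Definition Yx (K : fieldType) (G X : finGroupType) (M : crossed_module G X) (xi : qa_data K G X) x
  : eqobj K G X := @EqObj K G X 1 (fun _ => x) (fun g _ _ => lam M xi x g).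

Lemma Yx_valid (K : fieldType) (G X : finGroupType) (M : crossed_module G X) (HM : is_crossed_module M)
    (xi : qa_data K G X) (Hxi : is_qa_cocycle M xi) (Hn : qa_normalized xi) x :
  cm_surjective M ->
  cm_d M x = 1%g -> (forall k, cm_d M k = 1%g -> qa_c xi k x * qa_c xi x k = 1) ->
  valid_obj M xi (Yx M xi x).
Proof.
move=> Hs Hx Hk.
have c0 : forall x y, qa_c xi x y != 0 by case: Hxi => [[_ [_ [_ c0]]] _].
have L := lam_d HM Hxi Hn Hx Hk.
have lam0 : forall g, lam M xi x g != 0.
  move=> g; have [y <-] := Hs g; rewrite L /beta invr_eq0 mulf_neq0 //.
split => /=.
- move=> g i j _; have [y <-] := Hs g; by rewrite (cm_actd_central HM).
- move=> g; exists (fun _ _ => (lam M xi x g)^-1).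
  split; apply: functional_extensionality => i; apply: functional_extensionality => k;
    rewrite /lcomp /lid big_ord1 !ord1 eqxx.
    by rewrite mulfV.
  by rewrite mulVf.
- move=> g h i k; rewrite big_ord1.
  have [y <-] := Hs g; have [y' <-] := Hs h.
  case: (HM) => _ [_ [_ [Hd _]]].
  by rewrite -Hd !L (beta_mul HM Hxi Hn _ _ Hx) -mulrA (mulrC (beta xi x y)).
Qed.

Lemma Yx_transparent (K : fieldType) (G X : finGroupType) (M : crossed_module G X) (HM : is_crossed_module M)
    (xi : qa_data K G X) (Hxi : is_qa_cocycle M xi) (Hn : qa_normalized xi) x :
  cm_d M x = 1%g -> (forall k, cm_d M k = 1%g -> qa_c xi k x * qa_c xi x k = 1) ->
  transparent M xi (Yx M xi x).
Proof.
move=> Hx Hk Z HZ.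
have c0 : forall x y, qa_c xi x y != 0 by case: Hxi => [[_ [_ [_ c0]]] _].
have L := lam_d HM Hxi Hn Hx Hk.
have u1 := valid_u1 Hn HZ.
split; apply: functional_extensionality => p; apply: functional_extensionality => r.
- rewrite /lcomp (@sum_delta1 _ _ (p.2, p.1)).
    rewrite lid_pair /braid /= Hx u1 /lid !eqxx !mul1r L /beta !ord1 eqxx mul1r (eq_sym r.2).
    by rewrite /= ?mulr1n; field; rewrite !c0.
  case=> a b /=; rewrite xpair_eqE /braid /= Hx u1 /lid !ord1 eqxx andbT eq_sym => /negbTE ->.
  by rewrite !(mul0r, mulr0).
- rewrite /lcomp (@sum_delta1 _ _ (p.2, p.1)).
    rewrite lid_pair /braid /= Hx u1 /lid !eqxx !mul1r L /beta !ord1 eqxx mulr1.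
    by rewrite /= ?mulr1n; field; rewrite !c0.
  case=> a b /=; rewrite xpair_eqE /braid /= !ord1 eqxx /= => /negbTE ->.
  by rewrite !(mul0r, mulr0).
Qed.

Lemma Yx_not_unit (K : fieldType) (G X : finGroupType) (M : crossed_module G X) (xi : qa_data K G X) x :
  x != 1%g -> ~ is_sum_of_units (Yx M xi x).
Proof.
move=> Hx [n [F [H [[HF _] _ HFH _]]]].
have F0 : forall i j, F i j = 0.
  move=> i j; apply/eqP; apply/negPn/negP => /HF /= E.
  by move: Hx; rewrite -E eqxx.
have := congr1 (fun f => f ord0 ord0) HFH; rewrite /lcomp /lid eqxx big1 => [|j _]; last by rewrite F0 mul0r.
by move/eqP; rewrite eq_sym oner_eq0.
Qed.

Definition Himg (G X : finGroupType) (M : crossed_module G X) : {set G} := cm_d M @: [set: X].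

Definition Hclosed (G X : finGroupType) (M : crossed_module G X) (S : {set G}) : bool :=
  [forall s in S, forall h in Himg M, (s * h)%g \in S].

Definition sig (G X : finGroupType) (M : crossed_module G X) (g : G) (S : {set G}) : {set G} :=
  if Hclosed M S then (g *: S)%g else S.

Lemma Himg_d (G X : finGroupType) (M : crossed_module G X) y : cm_d M y \in Himg M.
Proof. by apply: imset_f; rewrite inE. Qed.

Lemma HimgP (G X : finGroupType) (M : crossed_module G X) h :
  reflect (exists y, h = cm_d M y) (h \in Himg M).
Proof.
apply: (iffP imsetP) => [[y _ ->]|[y ->]]; first by exists y.
by exists y; rewrite ?inE.
Qed.

Lemma Himg_conj (G X : finGroupType) (M : crossed_module G X) (HM : is_crossed_module M) h g :
  h \in Himg M -> (g^-1 * h * g)%g \in Himg M.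
Proof.
case/HimgP => y ->; case: HM => _ [_ [_ [_ [_ Hda]]]].
by rewrite -{2}(invgK g) -Hda Himg_d.
Qed.

Lemma Himg_inv (G X : finGroupType) (M : crossed_module G X) (HM : is_crossed_module M) h :
  h \in Himg M -> h^-1%g \in Himg M.
Proof. by case/HimgP => y ->; rewrite -(cm_dV HM) Himg_d. Qed.

Lemma closed_lcoset (G X : finGroupType) (M : crossed_module G X) S g :
  Hclosed M S -> Hclosed M (g *: S)%g.
Proof.
move=> /forall_inP H; apply/forall_inP => s; rewrite mem_lcoset => Hs.
apply/forall_inP => h Hh; rewrite mem_lcoset mulgA.
by move/forall_inP: (H _ Hs) => /(_ h Hh).
Qed.

Lemma fix_H (G X : finGroupType) (M : crossed_module G X) (HM : is_crossed_module M) S h :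
  h \in Himg M -> Hclosed M S -> (h *: S)%g = S.
Proof.
move=> Hh /forall_inP HS; apply/setP => t; rewrite mem_lcoset.
apply/idP/idP => Ht.
- have := HS _ Ht => /forall_inP /(_ (t^-1 * h * t)%g (Himg_conj HM t Hh)).
  by rewrite !mulgA mulgK mulVg mul1g.
- have := HS _ Ht => /forall_inP /(_ (t^-1 * h^-1 * t)%g (Himg_conj HM t (Himg_inv HM Hh))).
  by rewrite !mulgA mulgV mul1g.
Qed.

Lemma sig1 (G X : finGroupType) (M : crossed_module G X) S : sig M 1%g S = S.
Proof. by rewrite /sig; case: ifP => // _; rewrite lcoset1. Qed.

Lemma sigM (G X : finGroupType) (M : crossed_module G X) g h S :
  sig M (g * h)%g S = sig M g (sig M h S).
Proof.
rewrite /sig; case: ifP => HS; last by rewrite HS.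
by rewrite (closed_lcoset h HS) lcosetM.
Qed.

Lemma sigH (G X : finGroupType) (M : crossed_module G X) (HM : is_crossed_module M) h S :
  h \in Himg M -> sig M h S = S.
Proof. by move=> Hh; rewrite /sig; case: ifP => // HS; rewrite (fix_H HM). Qed.

Lemma Himg_closed (G X : finGroupType) (M : crossed_module G X) (HM : is_crossed_module M) :
  Hclosed M (Himg M).
Proof.
apply/forall_inP => s /HimgP [y ->]; apply/forall_inP => h /HimgP [y' ->].
by case: HM => _ [_ [_ [Hd _]]]; rewrite -Hd Himg_d.
Qed.

Definition Yc (K : fieldType) (G X : finGroupType) (M : crossed_module G X) : eqobj K G X :=
  @EqObj K G X #|{set G}| (fun _ => 1%g)
     (fun g i j => (enum_val j == sig M g (enum_val i))%:R).

Lemma delta2 (K : fieldType) (A B : eqType) (a a' : A) (b b' : B) :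
  ((a == a')%:R * (b == b')%:R : K) = ((a, b) == (a', b'))%:R.
Proof. by rewrite xpair_eqE -natrM mulnb. Qed.

Lemma Yc_valid (K : fieldType) (G X : finGroupType) (M : crossed_module G X) (HM : is_crossed_module M)
    (xi : qa_data K G X) (Hn : qa_normalized xi) :
  valid_obj M xi (Yc K M).
Proof.
split => /=.
- by move=> g i j _; rewrite cm_act1.
- move=> g; exists (obU (Yc K M) g^-1%g).
  split; apply: functional_extensionality => i; apply: functional_extensionality => k;
    rewrite /lcomp /lid /=.
  + rewrite (@sum_ev _ _ (sig M g (enum_val i))) => [|j /negbTE->]; last by rewrite mul0r.
    by rewrite enum_rankK eqxx mul1r -sigM mulVg sig1 ev_eq eq_sym.
  + rewrite (@sum_ev _ _ (sig M g^-1 (enum_val i))) => [|j /negbTE->]; last by rewrite mul0r.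
    by rewrite enum_rankK eqxx mul1r -sigM mulgV sig1 ev_eq eq_sym.
- move=> g h i k.
  case: Hn => _ Hg _ _; rewrite Hg; last by right; right.
  rewrite mul1r (@sum_ev _ _ (sig M h (enum_val i))) => [|j /negbTE->]; last by rewrite mul0r.
  by rewrite enum_rankK eqxx mul1r sigM.
Qed.

Lemma Yc_transparent (K : fieldType) (G X : finGroupType) (M : crossed_module G X) (HM : is_crossed_module M)
    (xi : qa_data K G X) (Hn : qa_normalized xi) :
  transparent M xi (Yc K M).
Proof.
move=> Z HZ; have u1 := valid_u1 Hn HZ.
case: (Hn) => _ _ _ Hc.
split; apply: swap_lcomp => p q; rewrite /braid /=.
- rewrite Hc; last by left.
  by rewrite (cm_d1 HM) u1 /lid mulr1 mulrC (eq_sym p.2) delta2; case: q.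
- rewrite Hc; last by right.
  by rewrite (sigH HM) ?Himg_d // ev_eq mulr1 mulrC delta2; case: q.
- rewrite Hc; last by right.
  by rewrite (sigH HM) ?Himg_d // ev_eq mulr1 mulrC delta2; case: q.
- rewrite Hc; last by left.
  by rewrite (cm_d1 HM) u1 /lid mulr1 mulrC (eq_sym p.2) delta2; case: q.
Qed.

Lemma Yc_not_unit (K : fieldType) (G X : finGroupType) (M : crossed_module G X) (HM : is_crossed_module M) g0 :
  g0 \notin Himg M -> ~ is_sum_of_units (Yc K M).
Proof.
move=> Hg0 [n [F [H [[_ HF] _ HFH _]]]].
have E : obU (Yc K M) g0 = lid.
  by rewrite -[LHS]lcomp_lid -HFH -lcompA HF /= lcomp_lid.
have := congr1 (fun f => f (enum_rank (Himg M)) (enum_rank (Himg M))) E.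
rewrite /lid /= eqxx enum_rankK /sig Himg_closed //.
have -> : (Himg M == (g0 *: Himg M)%g) = false.
  apply/negbTE; apply: contra Hg0 => /eqP ->.
  by rewrite mem_lcoset mulVg -(cm_d1 HM) Himg_d.
by move/eqP; rewrite eq_sym oner_eq0.
Qed.

Theorem proposition5p6 (K : closedFieldType) (charK : [pchar K]%R =i pred0)
    (G X : finGroupType) (M : crossed_module G X) (HM : is_crossed_module M)
    (xi : qa_data K G X) (Hxi : is_qa_cocycle M xi) (Hnorm : qa_normalized xi) :
  equivariantization_nondegenerate M xi <->
  cm_surjective M /\ qa_nondegenerate M xi.
Proof.
split; last by case=> Hs Hnd; exact: backward.
move=> ND.
have Hs : cm_surjective M.
  move=> g; case: (boolP (g \in Himg M)) => [/HimgP [y ->]|Hg]; first by exists y.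
  exfalso; apply: (@Yc_not_unit K G X M HM g Hg); apply: ND.
    exact: Yc_valid.
  exact: Yc_transparent.
split => // x Hx Hk; case: (eqVneq x 1%g) => // Hne; exfalso.
apply: (@Yx_not_unit K G X M xi x Hne); apply: ND.
  exact: Yx_valid.
exact: Yx_transparent.
Qed.
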